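(* Let $\Omega$ be a finite set, $K\ge1$, let $q$ be a probability distribution on $\Omega$ and let $p(x_1,\ldots,x_K)$ be a probability distribution on $\Omega^K$. Let $(X_1,\ldots,X_K)\sim p$ and $\mathcal{S}=\{X_1,\ldots,X_K\}$. Let $P^\star(\mathrm{acc})$ denote the supremum of $\Pr(Z\in\mathcal{S})$ over all valid token-level selection rules with output $Z$. Then $$P^\star(\mathrm{acc})=\max_{\{\beta_y(x_{1:K})\}}\ \sum_{y\in\Omega}\min\Big(q(y),\ \sum_{x_1,\ldots,x_K\in\Omega}\beta_y(x_{1:K})\,p(x_{1:K})\Big),$$ where the maximum is over all families $\beta_y(x_{1:K})$, $y\in\Omega$, $x_{1:K}\in\Omega^K$, with $0\le\beta_y(x_{1:K})\le1$, $\sum_{y\in\Omega}\beta_y(x_{1:K})=1$ for every $x_{1:K}\in\Omega^K$, and $\beta_y(x_{1:K})=0$ whenever $y\notin\{x_1,\ldots,x_K\}$. Moreover, if $\{\beta^\star_y(x_{1:K})\}$ attains the maximum, then $P^\star(\mathrm{acc})$ is attained by the two-step rule: first output an intermediate token $Y$ with $\Pr(Y=y\mid X_{1:K}=x_{1:K})=\beta^\star_y(x_{1:K})$; then apply single-draft speculative sampling to $Y$ with target $q$ to produce $Z$.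
   Context: A token-level selection rule is a conditional distribution $\mathcal{P}(\cdot\mid X_{1:K})$ on $\Omega$; it is valid if its output $Z$ satisfies $\Pr(Z=z)=\sum_{x_{1:K}}\mathcal{P}(z\mid x_{1:K})p(x_{1:K})=q(z)$ for all $z\in\Omega$. Single-draft speculative sampling of a token $Y$ with distribution $p_I$ against target $q$: with probability $\min(1,q(Y)/p_I(Y))$ output $Z=Y$; otherwise output $Z$ drawn from $p^{\mathrm{res}}(x)=\frac{q(x)-\min(p_I(x),q(x))}{1-\sum_{x'}\min(p_I(x'),q(x'))}$. Its output has distribution $q$. *)

(* Defs.v *)
From HB Require Import structures.
From mathcomp Require Import all_boot all_order all_algebra.
From mathcomp Require Import classical_sets reals.
Set Implicit Arguments. Unset Strict Implicit. Unset Printing Implicit Defensive.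
Import Order.TTheory GRing.Theory Num.Theory.
Local Open Scope ring_scope.

Section Defs.
Variables (R : realType) (Omega : finType) (K : nat).

Notation tup := {ffun 'I_K -> Omega}.

Definition is_dist (T : finType) (f : T -> R) :=
  (forall t, 0 <= f t) /\ \sum_t f t = 1.

Definition support (x : tup) : {set Omega} := [set x i | i : 'I_K].

(* a token-level selection rule: a conditional distribution P(z | x_{1:K}) *)
Definition cond_dist (P : tup -> Omega -> R) := forall x, is_dist (P x).

Definition valid_rule (p : tup -> R) (q : Omega -> R) (P : tup -> Omega -> R) :=
  cond_dist P /\ forall z, \sum_x P x z * p x = q z.

Definition acc_prob (p : tup -> R) (P : tup -> Omega -> R) :=
  \sum_x p x * \sum_(z in support x) P x z.

Definition admissible (beta : Omega -> tup -> R) :=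
  forall x, (forall y, 0 <= beta y x <= 1) /\ \sum_y beta y x = 1 /\
            (forall y, y \notin support x -> beta y x = 0).

Definition objective (p : tup -> R) (q : Omega -> R) (beta : Omega -> tup -> R) :=
  \sum_y Num.min (q y) (\sum_x beta y x * p x).

Definition marginal (p : tup -> R) (beta : Omega -> tup -> R) (y : Omega) :=
  \sum_x beta y x * p x.

Definition spec_accept (pI q : Omega -> R) (y : Omega) : R :=
  if pI y == 0 then 1 else Num.min 1 (q y / pI y).

Definition spec_res (pI q : Omega -> R) (z : Omega) : R :=
  (q z - Num.min (pI z) (q z)) / (1 - \sum_w Num.min (pI w) (q w)).

Definition spec_kernel (pI q : Omega -> R) (y z : Omega) : R :=
  (if z == y then spec_accept pI q y else 0) +
  (1 - spec_accept pI q y) * spec_res pI q z.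

Definition two_step (p : tup -> R) (q : Omega -> R) (beta : Omega -> tup -> R)
  (x : tup) (z : Omega) : R :=
  \sum_y beta y x * spec_kernel (marginal p beta) q y z.

End Defs.

(* Main.v *)
Require Import Defs.
From HB Require Import structures.
From mathcomp Require Import all_boot all_order all_algebra.
From mathcomp Require Import classical_sets reals.
From mathcomp Require Import lra.
From mathcomp Require Import boolp topology normedtype derive function_spaces.
Import Order.TTheory GRing.Theory Num.Theory numFieldNormedType.Exports.
Local Open Scope ring_scope.
Local Open Scope classical_set_scope.
Section T.
Variables (R : realType) (I : eqType).
Local Notation S := {ptws I -> R}.
Lemma proj_cont (i : I) : continuous (fun f : S => f i).
Proof. exact: (@proj_continuous I (fun _ => R) i). Qed.
Lemma box_compact : compact [set f : S | forall i, `[0, 1]%classic (f i)].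
Proof. exact: (@tychonoff I (fun _ => R) (fun _ => `[0,1]%classic) (fun _ => @segment_compact R 0 1)). Qed.
Lemma mulc_cont (g : S -> R) (c : R) : continuous g -> continuous (fun f => g f * c).
Proof. move=> cg f. exact: (@cvgMr_tmp R _ (nbhs f) _ g (g f) c (cg f)). Qed.
Lemma sum_cont (J : finType) (F : J -> S -> R) : (forall j, continuous (F j)) ->
  continuous (fun f => \sum_j F j f).
Proof. move=> h. have := (@continuous_big R J +%R 0 xpredT (@add_continuous _) _ (index_enum J) F (fun j _ => h j)). by []. Qed.
Lemma minc_cont (c : R) : continuous (fun a : R => Num.min c a).
Proof. move=> a. apply: (@continuous_min R R (fun=> c) id a).
 exact: cvg_cst. exact: cvg_id. Qed.
Lemma min_cont (g : S -> R) (c : R) : continuous g -> continuous (fun f => Num.min c (g f)).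
Proof. move=> cg f. exact: (continuous_comp (cg f) (minc_cont c (g f))). Qed.
End T.

Set Implicit Arguments. Unset Strict Implicit. Unset Printing Implicit Defensive.

Section Spec.
Variables (R : realType) (Omega : finType).
Variables (pI q : Omega -> R).
Hypotheses (hpI : forall y, 0 <= pI y) (hq : forall y, 0 <= q y)
  (spI : \sum_y pI y = 1) (sq : \sum_y q y = 1).

Local Notation acc := (spec_accept pI q).
Local Notation res := (spec_res pI q).
Local Notation ker := (spec_kernel pI q).
Local Notation sm := (\sum_w Num.min (pI w) (q w)).

Lemma acc01 y : 0 <= acc y <= 1.
Proof.
rewrite /spec_accept; case: eqP => [_|/eqP h]; first by rewrite ler01 lexx.
have hp : 0 < pI y by rewrite lt_def h hpI.
rewrite le_min ge_min lexx orTb ler01 /= divr_ge0 // ltW //.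
Qed.

Lemma accM y : pI y * acc y = Num.min (pI y) (q y).
Proof.
rewrite /spec_accept; case: eqP => [->|/eqP h]; first by rewrite mul0r min_l.
have hp : 0 < pI y by rewrite lt_def h hpI.
case: (leP (q y) (pI y)) => hqp.
  have e1 : q y / pI y <= 1 by rewrite ler_pdivrMr // mul1r.
  rewrite (min_r e1) mulrC divfK //; exact: lt0r_neq0.
have e1 : 1 <= q y / pI y by rewrite ler_pdivlMr // mul1r ltW.
by rewrite (min_l e1) mulr1.
Qed.

Lemma sm_le1 : sm <= 1.
Proof. rewrite -sq; apply: ler_sum => w _; by rewrite ge_min lexx orbT. Qed.

Lemma res_ge0 z : 0 <= res z.
Proof.
rewrite /spec_res divr_ge0 // subr_ge0 ?ge_min ?lexx ?orbT //; exact: sm_le1.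
Qed.

Lemma sm1_eq : sm = 1 -> forall y, pI y = q y.
Proof.
move=> h y.
have h1 : \sum_w (pI w - Num.min (pI w) (q w)) = 0 by rewrite sumrB h spI subrr.
have h2 : \sum_w (q w - Num.min (pI w) (q w)) = 0 by rewrite sumrB h sq subrr.
have n1 : forall w, true -> 0 <= pI w - Num.min (pI w) (q w).
  by move=> w _; rewrite subr_ge0 ge_min lexx.
have n2 : forall w, true -> 0 <= q w - Num.min (pI w) (q w).
  by move=> w _; rewrite subr_ge0 ge_min lexx orbT.
have /eqP e1 := psumr_eq0P n1 h1 (isT : true) (i:=y).
have /eqP e2 := psumr_eq0P n2 h2 (isT : true) (i:=y).
move: e1 e2; rewrite !subr_eq0 => /eqP <- /eqP <-; done.
Qed.

Lemma acc_sm1 : sm = 1 -> forall y, acc y = 1.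
Proof.
move=> h y; rewrite /spec_accept sm1_eq //; case: eqP => // /eqP h0.
by rewrite divff // min_l.
Qed.

Lemma res_sm1 : sm = 1 -> forall z, res z = 0.
Proof. by move=> h z; rewrite /spec_res h subrr invr0 mulr0. Qed.

Lemma sum_res : sm != 1 -> \sum_z res z = 1.
Proof.
move=> h; rewrite /spec_res -mulr_suml sumrB sq divff // subr_eq0 eq_sym //.
Qed.

Lemma ker_ge0 y z : 0 <= ker y z.
Proof.
have /andP[a0 a1] := acc01 y.
rewrite /spec_kernel addr_ge0 //; first by case: eqP.
by apply: mulr_ge0; [rewrite subr_ge0 | exact: res_ge0].
Qed.

Lemma ker_sum y : \sum_z ker y z = 1.
Proof.
rewrite /spec_kernel big_split /= -mulr_sumr.
rewrite (bigD1 y) //= eqxx big1 => [|z /negbTE -> //]; rewrite addr0.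
have [h|h] := eqVneq sm 1.
  by rewrite acc_sm1 // subrr mul0r addr0.
by rewrite sum_res // mulr1 addrC subrK.
Qed.

Lemma ker_marg z : \sum_y pI y * ker y z = q z.
Proof.
rewrite /spec_kernel.
under eq_bigr do rewrite mulrDr mulrA.
rewrite big_split /= -mulr_suml.
rewrite (bigD1 z) //= eqxx big1 => [|y /negbTE hy]; last by rewrite eq_sym hy mulr0.
rewrite addr0 accM.
under eq_bigr do rewrite mulrBr mulr1 accM.
rewrite sumrB spI.
have [h|h] := eqVneq sm 1.
  by rewrite h subrr mul0r addr0 sm1_eq // minxx.
rewrite /spec_res mulrC -mulrA mulVf ?mulr1; last by rewrite subr_eq0 eq_sym.
by rewrite addrC subrK.
Qed.
End Spec.

Section Two.
Variables (R : realType) (Omega : finType) (K : nat).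
Local Notation tup := {ffun 'I_K -> Omega}.
Variables (p : tup -> R) (q : Omega -> R) (beta : Omega -> tup -> R).
Hypotheses (hp : is_dist p) (hqd : is_dist q) (hb : admissible beta).

Local Notation pI := (marginal p beta).

Lemma pI_ge0 y : 0 <= pI y.
Proof.
rewrite /marginal; apply: sumr_ge0 => x _; apply: mulr_ge0.
  by have [/(_ y)/andP[]] := hb x.
by case: hp.
Qed.

Lemma pI_sum : \sum_y pI y = 1.
Proof.
rewrite /marginal exchange_big /=; case: hp => _ <-; apply: eq_bigr => x _.
by rewrite -mulr_suml; have [_ [-> _]] := hb x; rewrite mul1r.
Qed.

Lemma two_step_valid : valid_rule p q (two_step p q beta).
Proof.
case: hqd => hq sq.
split.
  move=> x; split.
    move=> z; rewrite /two_step; apply: sumr_ge0 => y _; apply: mulr_ge0.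
      by have [/(_ y)/andP[]] := hb x.
    have := ker_ge0 pI_ge0 hq sq y z. exact.
  rewrite /two_step; rewrite exchange_big /=.
  have [_ [<- _]] := hb x; apply: eq_bigr => y _.
  by rewrite -mulr_sumr (ker_sum pI_sum sq) mulr1.
move=> z; rewrite /two_step.
under eq_bigr do rewrite mulr_suml.
rewrite exchange_big /=.
rewrite -[RHS](ker_marg pI_ge0 hq pI_sum sq z).
apply: eq_bigr => y _; rewrite /marginal mulr_suml; apply: eq_bigr => x _.
by rewrite mulrAC.
Qed.

Lemma two_step_acc : objective p q beta <= acc_prob p (two_step p q beta).
Proof.
case: hqd => hq sq.
have hpx : forall x, 0 <= p x by case: hp.
have step : forall x, \sum_z beta z x * spec_accept pI q z <=
    \sum_(z in Defs.support x) two_step p q beta x z.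
  move=> x; rewrite [leRHS]big_mkcond /=; apply: ler_sum => z _.
  case: ifPn => zS; last first.
    by have [_ [_ ->]] := hb x; rewrite ?mul0r.
  rewrite /two_step (bigD1 z) //= -[leLHS]addr0; apply: lerD.
    apply: ler_wpM2l; first by have [/(_ z)/andP[]] := hb x.
    rewrite /spec_kernel eqxx lerDl; apply: mulr_ge0.
      by have /andP[_ ?] := acc01 pI_ge0 hq z; rewrite subr_ge0.
    exact: res_ge0 sq z.
  apply: sumr_ge0 => y _; apply: mulr_ge0.
    by have [/(_ y)/andP[]] := hb x.
  exact: (ker_ge0 pI_ge0 hq sq y z).
apply: (le_trans _ (ler_sum _ (fun x _ => ler_wpM2l (hpx x) (step x)))).
rewrite /objective.
under eq_bigr do rewrite minC -(accM pI_ge0 hq).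
under [leRHS]eq_bigr do rewrite mulr_sumr.
rewrite exchange_big /=; apply: ler_sum => y _.
rewrite /marginal mulr_suml; apply: ler_sum => x _.
by rewrite mulrCA mulrA.
Qed.
End Two.

Section Three.
Variables (R : realType) (Omega : finType) (K : nat).
Local Notation tup := {ffun 'I_K -> Omega}.
Variables (p : tup -> R) (q : Omega -> R) (i0 : 'I_K).
Hypotheses (hp : is_dist p) (hqd : is_dist q).

Lemma in_supp (x : tup) : x i0 \in Defs.support x.
Proof. by apply/imsetP; exists i0. Qed.

Lemma sub_sum_le (x : tup) (P : Omega -> R) (A : {set Omega}) :
  (forall z, 0 <= P z) -> \sum_(z in A) P z <= \sum_z P z.
Proof.
move=> h; rewrite [leLHS]big_mkcond; apply: ler_sum => z _.
by case: ifP.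
Qed.

Lemma term_le (P : Omega -> R) (A : {set Omega}) y :
  (forall z, 0 <= P z) -> y \in A -> P y <= \sum_(z in A) P z.
Proof.
move=> h yA; rewrite (bigD1 y) //= lerDl; apply: sumr_ge0 => z _; exact: h.
Qed.

Lemma valid_bound (P : tup -> Omega -> R) : valid_rule p q P ->
  exists beta, admissible beta /\ acc_prob p P <= objective p q beta.
Proof.
move=> [hP hm].
pose s x := \sum_(z in Defs.support x) P x z.
have P0 x z : 0 <= P x z by case: (hP x).
have s1 x : s x <= 1.
  by case: (hP x) => _ <-; apply: sub_sum_le.
pose b y x := (y \in Defs.support x)%:R * P x y + (y == x i0)%:R * (1 - s x).
have bge y x : (y \in Defs.support x)%:R * P x y <= b y x.
  by rewrite /b lerDl mulr_ge0 // subr_ge0.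
exists b; split.
  move=> x; split; last split.
  - move=> y; apply/andP; split.
      by rewrite addr_ge0 ?mulr_ge0 // subr_ge0.
    rewrite /b; case: eqP => [->|_].
      rewrite in_supp !mul1r.
      have := term_le (P0 x) (in_supp x); rewrite -/(s x) => h; lra.
    rewrite mul0r addr0; case: (_ \in _); rewrite ?mul1r ?mul0r ?ler01 //.
    case: (hP x) => _ <-; rewrite (bigD1 y) //= lerDl.
    by apply: sumr_ge0 => z _.
  - rewrite /b big_split /=.
    rewrite [X in _ + X](bigD1 (x i0)) //= [X in _ + (_ + X)]big1 => [|y /negbTE ->]; last by rewrite mul0r.
    rewrite eqxx mul1r addr0.
    have -> : \sum_i (i \in Defs.support x)%:R * P x i = s x.
      by rewrite /s [RHS]big_mkcond; apply: eq_bigr => z _; case: (_ \in _); rewrite ?mul1r ?mul0r.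
    by rewrite addrC subrK.
  - move=> y yS; rewrite /b (negbTE yS) mul0r add0r.
    have -> : (y == x i0) = false by apply/negbTE; apply: contraNneq yS => ->; exact: in_supp.
    by rewrite mul0r.
rewrite /acc_prob /objective.
have -> : \sum_x p x * \sum_(z in Defs.support x) P x z =
   \sum_z \sum_x ((z \in Defs.support x)%:R * P x z) * p x.
  rewrite exchange_big /=; apply: eq_bigr => x _.
  rewrite mulrC mulr_suml big_mkcond /=; apply: eq_bigr => z _.
  by case: (_ \in _); rewrite ?mul1r ?mul0r.
apply: ler_sum => y _; rewrite le_min; apply/andP; split.
  rewrite -hm; apply: ler_sum => x _; apply: ler_wpM2r; first by case: hp.
  by case: (_ \in _); rewrite ?mul1r ?mul0r.
apply: ler_sum => x _; apply: ler_wpM2r; first by case: hp.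
exact: bge.
Qed.

Lemma P0_valid : valid_rule p q (fun _ z => q z).
Proof.
split; first by move=> x.
by move=> z; rewrite -mulr_sumr; case: hp => _ ->; rewrite mulr1.
Qed.
End Three.


Section Opt.
Variables (R : realType) (Omega : finType) (K : nat).
Local Notation tup := {ffun 'I_K -> Omega}.
Local Notation I := (Omega * tup)%type.
Local Notation S := {ptws I -> R}.
Variables (p : tup -> R) (q : Omega -> R) (i0 : 'I_K).

Lemma exists_opt : exists beta, admissible beta /\
  forall beta', admissible beta' -> objective p q beta' <= objective p q beta.
Proof.
pose U (f : S) : Omega -> tup -> R := fun y x => f (y, x).
pose A := [set f : S | admissible (U f)].
have A0 : A !=set0.
  exists (fun yx : I => (yx.1 == yx.2 i0)%:R : R).
  move=> x; split; last split.
  - by move=> y; rewrite /U /=; case: eqP; rewrite ?ler01 ?lexx.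
  - rewrite /U /= (bigD1 (x i0)) //= eqxx big1 ?addr0 // => y /negbTE -> //.
  - move=> y yS; rewrite /U /=; case: eqP => // e.
    by move: yS; rewrite e in_supp.
have cl : closed A.
  have -> : A = \bigcap_(x in setT)
     ((fun f : S => \sum_y f (y, x)) @^-1` [set r | r = 1] `&`
      \bigcap_(y in setT) ((fun f : S => f (y, x)) @^-1` `[0, 1]%classic `&`
        (fun f : S => f (y, x) * (y \notin Defs.support x)%:R) @^-1` [set r | r = 0])).
    apply/seteqP; split => f /=.
      move=> hf x _; have [h1 [h2 h3]] := hf x; split => // y _; split.
        by rewrite /= in_itv /=; exact: h1 y.
      case: (boolP (y \in Defs.support x)) => hy.
        by rewrite /preimage /= mulr0.
      by have := h3 y hy; rewrite /U /preimage /= => ->; rewrite mul0r.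
    move=> hf x; have [h1 h2] := hf x Logic.I; split; last split.
    - by move=> y; have [] := h2 y Logic.I; rewrite /= in_itv.
    - exact: h1.
    - move=> y hy; have [_] := h2 y Logic.I; rewrite /= hy mulr1; exact.
  apply: closed_bigI => x _; apply: closedI.
    apply: preimage_closed; last exact: closed_eq.
    move=> f _; apply: sum_cont => y; exact: proj_cont.
  apply: closed_bigI => y _; apply: closedI.
    apply: preimage_closed; last exact: itv_closed.
    move=> f _; exact: proj_cont.
  apply: preimage_closed; last exact: closed_eq.
  move=> f _; apply: mulc_cont; exact: proj_cont.
have cA : compact A.
  apply: (subclosed_compact cl (box_compact R I)).
  move=> f Af [y x]; have [h1 _] := Af x; rewrite /= in_itv /=; exact: h1 y.
have cont : continuous (fun f : S => objective p q (U f)).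
  rewrite /objective /U; apply: sum_cont => y; apply: min_cont.
  apply: sum_cont => x; apply: mulc_cont; exact: proj_cont.
have [c cA' cmax] := compact_EVT_max A0 cA (@continuous_subspaceT _ _ A _ cont).
exists (U c); split; first by move: cA'; rewrite inE.
move=> b' hb'.
have := cmax (fun yx : I => b' yx.1 yx.2); apply.
by rewrite inE.
Qed.
End Opt.

Theorem theorem4 (R : realType) (Omega : finType) (K : nat)
  (q : Omega -> R) (p : {ffun 'I_K -> Omega} -> R) :
  (0 < K)%N -> is_dist q -> is_dist p ->
  let Pstar := sup [set a : R | exists P : {ffun 'I_K -> Omega} -> Omega -> R,
                      valid_rule p q P /\ acc_prob p P = a] in
  (exists beta : Omega -> {ffun 'I_K -> Omega} -> R,
      admissible beta /\ objective p q beta = Pstar) /\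
  (forall beta : Omega -> {ffun 'I_K -> Omega} -> R,
      admissible beta -> objective p q beta <= Pstar) /\
  (forall beta : Omega -> {ffun 'I_K -> Omega} -> R,
      admissible beta -> objective p q beta = Pstar ->
      valid_rule p q (two_step p q beta) /\ acc_prob p (two_step p q beta) = Pstar).
Proof.
move=> K0 hq hp Pstar.
pose i0 : 'I_K := Ordinal K0.
pose E := [set a : R | exists P : {ffun 'I_K -> Omega} -> Omega -> R, valid_rule p q P /\ acc_prob p P = a].
have [bM [hbM bMmax]] := exists_opt p q i0.
have E0 : E !=set0 by exists (acc_prob p (fun _ z => q z)); exists (fun _ z => q z); split => //; exact: P0_valid.
have ub : ubound E (objective p q bM).
  move=> a [P [vP <-]]; have [b [hb le]] := valid_bound i0 hp vP.
  exact: le_trans le (bMmax b hb).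
have hs : has_sup E by split => //; exists (objective p q bM).
have inE' : forall b, admissible b -> E (acc_prob p (two_step p q b)).
  by move=> b hb; exists (two_step p q b); split => //; exact: two_step_valid.
have le2 : forall b, admissible b -> objective p q b <= Pstar.
  move=> b hb; apply: le_trans (two_step_acc hp hq hb) _.
  exact: sup_upper_bound hs _ (inE' b hb).
split.
  exists bM; split => //; apply/eqP; rewrite eq_le le2 //=.
  exact: ge_sup.
split => // b hb hobj; split; first exact: two_step_valid.
apply/eqP; rewrite eq_le; apply/andP; split.
  exact: sup_upper_bound hs _ (inE' b hb).
by rewrite -hobj; exact: two_step_acc.
Qed.
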